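(* Let $X$ be a finite simple connected graph with adjacency matrix $A$, and let $u \ne v$ be vertices such that $u$ is spectrally extremal and $u$ and $v$ are strongly cospectral, say $E_r e_v = \sigma_r E_r e_u$ with $\sigma_r \in \{+1,-1\}$ for each $\theta_r \in \Phi_u$. Let $p(x)$ be the polynomial of minimum degree with $p(\theta_r) = \sigma_r$ for all $\theta_r \in \Phi_u$ (so that $p(A)e_u = e_v$). Let $X'$ be the connected component of $X \setminus v$ containing $u$. Then, up to a nonzero constant factor, $p(x)$ is the minimal polynomial of $u$ with respect to $X'$, i.e. the monic polynomial $q$ of least degree such that $q(A(X'))e_u = 0$.
   Context: $A = \sum_r \theta_r E_r$ is the spectral decomposition of $A$ ($\theta_r$ distinct eigenvalues, $E_r$ orthogonal projections onto eigenspaces); $e_w$ is the standard basis vector of $w$. Eigenvalue support: $\Phi_u = \{\theta_r : E_r e_u \ne 0\}$; dual degree $d^*(u) = |\Phi_u|-1$; eccentricity $\varepsilon_u = \max_w d(u,w)$; $u$ is spectrally extremal if $\varepsilon_u = d^*(u)$. Vertices $u,v$ are strongly cospectral if $E_r e_u = \pm E_r e_v$ for every $r$. $A(X')$ denotes the adjacency matrix of $X'$, and $e_u$ is then the standard basis vector of $u$ in $\mathbb{R}^{V(X')}$. *)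

(* Defs.v *)
From HB Require Import structures.
From mathcomp Require Import all_boot all_order all_algebra.
From mathcomp Require Import reals.
Set Implicit Arguments. Unset Strict Implicit. Unset Printing Implicit Defensive.
Import Order.TTheory GRing.Theory Num.Theory.
Local Open Scope ring_scope.

Definition simple_graph (n : nat) (e : rel 'I_n) : Prop :=
  irreflexive e /\ symmetric e.

Definition graph_connected (T : finType) (e : rel T) : Prop :=
  forall x y : T, connect e x y.

Definition walk_of_len (T : finType) (e : rel T) (k : nat) (u w : T) : bool :=
  [exists p : k.-tuple T, path e u p && (last u p == w)].

(* graph distance: least k with a walk of length k (a shortest walk is a
   path, of length < #|T|); #|T| if w is unreachable (irrelevant for
   connected graphs). *)
Definition dist (T : finType) (e : rel T) (u w : T) : nat :=
  find (fun k => walk_of_len e k u w) (iota 0 #|T|).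

Definition ecc (T : finType) (e : rel T) (u : T) : nat :=
  (\max_(w : T) dist e u w)%N.

Definition adjmx (R : nzRingType) (n : nat) (e : rel 'I_n) : 'M[R]_n :=
  \matrix_(i, j) (e i j)%:R.

Definition evec (R : nzRingType) (n : nat) (u : 'I_n) : 'cV[R]_n :=
  delta_mx u 0.

(* orthogonal projection onto the eigenspace of A for theta:
   with B a basis (rows) of the eigenspace, E = B^T (B B^T)^-1 B.
   It is 0 when theta is not an eigenvalue. *)
Definition eigproj (R : realFieldType) (n : nat) (A : 'M[R]_n) (theta : R)
  : 'M[R]_n :=
  let B := row_base (eigenspace A theta) in
  B^T *m invmx (B *m B^T) *m B.

Definition eig_support (R : realFieldType) (n : nat) (A : 'M[R]_n) (u : 'I_n)
  (theta : R) : Prop :=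
  eigproj A theta *m evec R u != 0.

(* dual degree d*(u) = |Phi_u| - 1; Phi_u is finite, represented by a
   duplicate-free list enumerating it *)
Definition dual_degree_is (R : realFieldType) (n : nat) (A : 'M[R]_n)
  (u : 'I_n) (d : nat) : Prop :=
  exists s : seq R, [/\ uniq s, (forall theta, theta \in s <-> eig_support A u theta)
                     & d = (size s).-1].

Definition spectrally_extremal (R : realFieldType) (n : nat) (e : rel 'I_n)
  (u : 'I_n) : Prop :=
  dual_degree_is (adjmx R e) u (ecc e u).

Definition strongly_cospectral (R : realFieldType) (n : nat) (A : 'M[R]_n)
  (u v : 'I_n) : Prop :=
  forall theta : R,
    eigproj A theta *m evec R v = eigproj A theta *m evec R u \/
    eigproj A theta *m evec R v = - (eigproj A theta *m evec R u).

Definition del_vertex (T : finType) (e : rel T) (v : T) : rel T :=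
  fun x y => [&& x != v, y != v & e x y].

Definition comp_del (T : finType) (e : rel T) (v u : T) : {set T} :=
  [set w | (w != v) && connect (del_vertex e v) u w].

Definition sub_adjmx (R : nzRingType) (T : finType) (e : rel T) (S : {set T})
  : 'M[R]_#|S| :=
  \matrix_(i, j) (e (enum_val i) (enum_val j))%:R.

Definition sub_evec (R : nzRingType) (T : finType) (S : {set T}) (u : T)
  : 'cV[R]_#|S| :=
  \col_(i < #|S|) (enum_val i == u)%:R.

Definition poly_mx_app (R : nzRingType) (m : nat) (q : {poly R}) (M : 'M[R]_m)
  (x : 'cV[R]_m) : 'cV[R]_m :=
  \sum_(i < size q) q`_i *: (M ^+ i *m x).

Definition is_minpoly_vec (R : nzRingType) (m : nat) (M : 'M[R]_m)
  (x : 'cV[R]_m) (q : {poly R}) : Prop :=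
  [/\ q \is monic, poly_mx_app q M x = 0 &
      forall r : {poly R}, r \is monic -> poly_mx_app r M x = 0 ->
        (size q <= size r)%N].

(* Main.v *)
Require Import Defs.
From HB Require Import structures.
From mathcomp Require Import all_boot all_order all_algebra.
From mathcomp Require Import reals.
From mathcomp.real_closed Require Import complex.
From mathcomp Require Import sesquilinear spectral.
Import Order.TTheory GRing.Theory Num.Theory.
Local Open Scope ring_scope.

Section Walks.
Variables (T : finType) (e : rel T).

Lemma walk0 a b : walk_of_len e 0 a b = (a == b).
Proof.
apply/existsP/eqP => [[p /andP[_ /eqP]]|->]; first by rewrite tuple0.
by exists [tuple]; rewrite /= eqxx.
Qed.

Lemma walkS j a b :
  walk_of_len e j.+1 a b = [exists x, e a x && walk_of_len e j x b].
Proof.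
apply/existsP/existsP => [[p]|[x /andP[ax /existsP[p /andP[pp lp]]]]].
  case/tupleP: p => x p /= /andP[/andP[ax pp] lp].
  by exists x; rewrite ax; apply/existsP; exists p; rewrite pp.
by exists [tuple of x :: p]; rewrite /= ax pp.
Qed.

Lemma walk_cat i j a b c :
  walk_of_len e i a b -> walk_of_len e j b c -> walk_of_len e (i + j) a c.
Proof.
elim: i a => [|i IH] a; first by rewrite walk0 => /eqP->.
rewrite walkS => /existsP[x /andP[ax wx]] wj.
by rewrite addSn walkS; apply/existsP; exists x; rewrite ax IH.
Qed.

Lemma dist_le j a b : walk_of_len e j a b -> (dist e a b <= j)%N.
Proof.
move=> w; rewrite /dist; set P := fun k => _.
have [jn|nj] := ltnP j #|T|; last first.
  by apply: leq_trans (find_size _ _) _; rewrite size_iota.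
rewrite leqNgt; apply/negP => lt.
have := before_find 0%N lt; rewrite nth_iota // add0n /P w //.
Qed.

Lemma dist_walk a b : connect e a b -> walk_of_len e (dist e a b) a b.
Proof.
move=> /connectP[p pp ->].
case: (shortenP pp) => q qp uq _.
have hasW : has (fun k => walk_of_len e k a (last a q)) (iota 0 #|T|).
  apply/hasP; exists (size q).
    rewrite mem_iota add0n /=.
    have := card_uniqP uq => cq.
    by change (size (a :: q) <= #|T|)%N; rewrite -cq max_card.
  by rewrite /walk_of_len; apply/existsP; exists (in_tuple q); rewrite /= qp eqxx.
have := nth_find 0%N hasW; rewrite nth_iota ?add0n //.
by have := hasW; rewrite has_find size_iota.
Qed.


Lemma walk_sym : symmetric e -> forall j a b,
  walk_of_len e j a b -> walk_of_len e j b a.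
Proof.
move=> es; elim=> [|j IH] a b; first by rewrite !walk0 eq_sym.
rewrite walkS => /existsP[x /andP[ax wx]].
rewrite -addn1; apply: walk_cat (IH _ _ wx) _.
by rewrite walkS; apply/existsP; exists a; rewrite es ax walk0 eqxx.
Qed.

End Walks.

Section Adj.
Variables (R : realFieldType) (n : nat) (e : rel 'I_n).
Local Notation A := (adjmx R e).

Lemma adj_powS j a b :
  (A ^+ j.+1) a b = \sum_x (e a x)%:R * (A ^+ j) x b.
Proof. by rewrite exprS -mulmxE mxE; apply: eq_bigr => x _; rewrite mxE. Qed.

Lemma adj_pow0 a b : (A ^+ 0) a b = (a == b)%:R.
Proof. by rewrite expr0 mxE. Qed.

Lemma adj_pow_ge0 j a b : 0 <= (A ^+ j) a b.
Proof.
elim: j a b => [|j IH] a b; first by rewrite adj_pow0 ler0n.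
by rewrite adj_powS sumr_ge0 // => x _; rewrite mulr_ge0 ?ler0n.
Qed.

Lemma adj_pow_neq0 j a b : ((A ^+ j) a b != 0) = walk_of_len e j a b.
Proof.
elim: j a b => [|j IH] a b; first by rewrite adj_pow0 walk0 pnatr_eq0 eqb0 negbK.
rewrite adj_powS walkS; apply/idP/idP.
  apply: contraNT => /existsPn H; apply/eqP; apply: big1 => x _.
  have := H x; rewrite -IH; case: (e a x) => /=; last by rewrite mul0r.
  by move=> /negPn/eqP->; rewrite mulr0.
case/existsP => x /andP[ax w]; rewrite (bigD1 x) //=.
apply: lt0r_neq0; apply: ltr_wpDr; first by rewrite sumr_ge0 // => y _; rewrite mulr_ge0 ?ler0n ?adj_pow_ge0.
by rewrite ax mul1r lt0r IH w adj_pow_ge0.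
Qed.

End Adj.

Section Eig.
Variables (R : realFieldType) (n : nat) (A : 'M[R]_n).

Lemma row_base_eig th : row_base (eigenspace A th) *m A = th *: row_base (eigenspace A th).
Proof. by apply/eigenspaceP; rewrite eq_row_base. Qed.

Lemma eigproj_mulA th : eigproj A th *m A = th *: eigproj A th.
Proof.
rewrite /eigproj /=; set B := row_base _.
have H : B *m A = th *: B by exact: row_base_eig.
clearbody B.
by rewrite -!mulmxA H !scalemxAr.
Qed.

Lemma eigproj_pow th i : eigproj A th *m A ^+ i = th ^+ i *: eigproj A th.
Proof.
elim: i => [|i IH]; first by rewrite !expr0 mulmx1 scale1r.
by rewrite exprSr -mulmxE mulmxA IH -scalemxAl eigproj_mulA scalerA -exprSr.
Qed.

Lemma eigproj_poly th (q : {poly R}) (x : 'cV_n) :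
  eigproj A th *m poly_mx_app q A x = q.[th] *: (eigproj A th *m x).
Proof.
rewrite /poly_mx_app mulmx_sumr horner_coef scaler_suml; apply: eq_bigr => i _.
by rewrite -scalemxAr mulmxA eigproj_pow -scalemxAl scalerA.
Qed.

Lemma gram_unit m (B : 'M[R]_(m, n)) : row_free B -> B *m B^T \in unitmx.
Proof.
move=> fB; rewrite -row_free_unit -kermx_eq0; apply/eqP/row_matrixP => i.
rewrite row0; set y := row i _.
have y0 : y *m (B *m B^T) = 0 by rewrite /y -row_mul mulmx_ker row0.
apply/eqP; rewrite -(mulmx_free_eq0 _ fB); apply/eqP.
set z := y *m B.
have z0 : z *m z^T = 0 by rewrite /z trmx_mul mulmxA -(mulmxA y) y0 mul0mx.
clearbody z; apply/rowP => k; rewrite mxE.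
have : (z *m z^T) 0 0 = 0 by rewrite z0 mxE.
rewrite mxE => /eqP; rewrite psumr_eq0 => [/allP/(_ k (mem_index_enum _))|j _].
  by rewrite /= mxE mulf_eq0 orbb => /eqP.
by rewrite mxE -expr2 sqr_ge0.
Qed.

Lemma eigproj_eq0 th (x : 'cV_n) :
  eigproj A th *m x = 0 -> row_base (eigenspace A th) *m x = 0.
Proof.
set B := row_base _ => E0.
have U : B *m B^T \in unitmx by apply: gram_unit; apply: row_base_free.
have : B *m (eigproj A th *m x) = 0 by rewrite E0 mulmx0.
rewrite /eigproj /= -/B; clearbody B.
by rewrite !mulmxA mulmxV // mul1mx.
Qed.

End Eig.

Section Compl.
Variable R : rcfType.
Local Notation C := (R[i]).
Local Notation f := (real_complex R).
Local Notation Re := (@complex.Re R).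
Local Notation Im := (@complex.Im R).

Lemma Re_sum (I : finType) (F : I -> C) : Re (\sum_k F k) = \sum_k Re (F k).
Proof.
elim/big_rec2: _ => // k y1 y2 _ <-.
by case: (F k) => a b; case: y2 => c d.
Qed.

Lemma Im_sum (I : finType) (F : I -> C) : Im (\sum_k F k) = \sum_k Im (F k).
Proof.
elim/big_rec2: _ => // k y1 y2 _ <-.
by case: (F k) => a b; case: y2 => c d.
Qed.

Lemma Re_mulr (z : C) (r : R) : Re (z * f r) = Re z * r.
Proof. by case: z => a b /=; simpc. Qed.

Lemma Im_mulr (z : C) (r : R) : Im (z * f r) = Im z * r.
Proof. by case: z => a b /=; simpc. Qed.

Lemma Re_mull (z : C) (r : R) : Re (f r * z) = r * Re z.
Proof. by case: z => a b /=; simpc. Qed.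

Lemma Im_mull (z : C) (r : R) : Im (f r * z) = r * Im z.
Proof. by case: z => a b /=; simpc. Qed.


Lemma mulmx_ReE m n l (p : 'M[C]_(m, n)) (M : 'M[R]_(n, l)) i j :
  (map_mx Re p *m M) i j = Re ((p *m map_mx f M) i j).
Proof.
rewrite !mxE Re_sum; apply: eq_bigr => k _; by rewrite !mxE Re_mulr.
Qed.

Lemma mulmx_ImE m n l (p : 'M[C]_(m, n)) (M : 'M[R]_(n, l)) i j :
  (map_mx Im p *m M) i j = Im ((p *m map_mx f M) i j).
Proof.
rewrite !mxE Im_sum; apply: eq_bigr => k _; by rewrite !mxE Im_mulr.
Qed.

Lemma sym_complete n (A : 'M[R]_n) : A^T = A -> forall x : 'cV_n, x != 0 ->
  exists th (w : 'rV_n), w *m A = th *: w /\ w *m x != 0.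
Proof.
move=> sA x x0.
pose AC := map_mx f A.
have hA : AC \is hermsymmx.
  apply/is_hermitianmxP; rewrite expr0 scale1r; apply/matrixP => i j; rewrite !mxE.
  have -> : A j i = A i j by rewrite -[in LHS]sA mxE.
  by rewrite conj_Creal // complex_real.
pose P := spectralmx AC; pose D := spectral_diag AC.
have PU : P \in unitmx := spectral_unit AC.
have eqA : AC = invmx P *m diag_mx D *m P.
  by apply/orthomx_spectralP; apply: hermitian_normalmx.
have PA : P *m AC = diag_mx D *m P.
  by rewrite [in LHS]eqA !mulmxA mulmxV // mul1mx.
pose xC := map_mx f x.
have xC0 : xC != 0 by rewrite map_mx_eq0.
have PxC : P *m xC != 0.
  by apply: contra xC0 => /eqP h; rewrite -(mulKmx PU xC) h mulmx0.
have [i Hi] : exists i, (P *m xC) i 0 != 0.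
  apply/existsP; apply: contraR PxC => /existsPn H; apply/eqP/colP => i.
  by rewrite [RHS]mxE; apply/eqP; rewrite -[_ == _]negbK H.
pose p := row i P.
have pA : p *m AC = D 0 i *: p.
  by rewrite /p -row_mul PA row_mul row_diag_mx -scalemxAl -rowE.
have Dr : D 0 i \is Num.real.
  by have /mxOverP := hermitian_spectral_diag_real hA; apply.
pose th := Re (D 0 i).
have Dth : D 0 i = f th by rewrite /th RRe_real.
pose a := map_mx Re p; pose b := map_mx Im p.
have aA : a *m A = th *: a.
  apply/rowP => j; rewrite mulmx_ReE pA Dth !mxE.
  by rewrite Re_mull.
have bA : b *m A = th *: b.
  apply/rowP => j; rewrite mulmx_ImE pA Dth !mxE.
  by rewrite Im_mull.
have pxE : (P *m xC) i 0 = (p *m xC) 0 0.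
  by rewrite /p -row_mul [RHS]mxE.
have ax : (a *m x) 0 0 = Re ((P *m xC) i 0).
  by rewrite pxE mulmx_ReE.
have bx : (b *m x) 0 0 = Im ((P *m xC) i 0).
  by rewrite pxE mulmx_ImE.
have nz1 (w : 'rV_n) : w *m x = 0 -> (w *m x) 0 0 = 0 by move=> ->; rewrite mxE.
exists th; case: (eqVneq ((a *m x) 0 0) 0) => [a0|a0].
  exists b; split => //; apply/eqP => /nz1; rewrite bx => b0.
  move: Hi; rewrite a0 in ax; move: ax b0.
  by case: ((P *m xC) i 0) => c d /= <- ->; rewrite eqxx.
by exists a; split => //; apply/eqP => /nz1; apply/eqP.
Qed.

End Compl.

Lemma eig_complete (R : realType) n (A : 'M[R]_n) (x : 'cV_n) :
  A^T = A -> (forall th, eigproj A th *m x = 0) -> x = 0.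
Proof.
move=> sA H; apply/eqP; apply/negPn/negP => x0.
have [th [w [wA wx]]] := @sym_complete R _ _ sA _ x0.
have : (w <= row_base (eigenspace A th))%MS by rewrite eq_row_base; apply/eigenspaceP.
case/submxP => D wD; move: wx; by rewrite wD -mulmxA (@eigproj_eq0 _ _ _ _ _ (H th)) mulmx0 eqxx.
Qed.

Lemma pma_entry (R : nzRingType) m (q : {poly R}) (M : 'M[R]_m) x i :
  (poly_mx_app q M x) i 0 = \sum_(j < size q) q`_j * (M ^+ j *m x) i 0.
Proof. by rewrite /poly_mx_app summxE; apply: eq_bigr => j _; rewrite mxE. Qed.

Lemma pow_evec (R : nzRingType) m (M : 'M[R]_m) w u :
  (M *m evec R u) w 0 = M w u.
Proof. by rewrite /evec -colE mxE. Qed.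

Lemma adj_tr (R : nzRingType) n (e : rel 'I_n) : symmetric e -> (adjmx R e)^T = adjmx R e.
Proof. by move=> es; apply/matrixP => i j; rewrite !mxE es. Qed.


From mathcomp Require Import zify.

Theorem lemma3p4 (R : realType) (n : nat) (e : rel 'I_n) (u v : 'I_n)
  (sigma : R -> R) (p : {poly R}) :
  simple_graph e ->
  graph_connected e ->
  u != v ->
  spectrally_extremal R e u ->
  strongly_cospectral (adjmx R e) u v ->
  (forall theta : R, eig_support (adjmx R e) u theta ->
     (sigma theta = 1 \/ sigma theta = -1) /\
     eigproj (adjmx R e) theta *m evec R v
       = sigma theta *: (eigproj (adjmx R e) theta *m evec R u)) ->
  (forall theta : R, eig_support (adjmx R e) u theta -> p.[theta] = sigma theta) ->
  (forall q : {poly R},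
     (forall theta : R, eig_support (adjmx R e) u theta -> q.[theta] = sigma theta) ->
     (size p <= size q)%N) ->
  exists c : R, c != 0 /\
    is_minpoly_vec (sub_adjmx R e (comp_del e v u))
                   (sub_evec R (comp_del e v u) u) (c *: p).
Proof.
move=> [eirr esym] conn uv [s [us sP dE]] scs Hsig Hp Hmin.
set A := adjmx R e; set eu := evec R u; set ev := evec R v.
have sA : A^T = A := @adj_tr R _ _ esym.
have evE : ev = poly_mx_app p A eu.
  apply/eqP; rewrite -subr_eq0; apply/eqP; apply: (@eig_complete R _ A _ sA) => th.
  rewrite mulmxBr eigproj_poly.
  case: (boolP (eigproj A th *m eu == 0)) => [/eqP E0|En0].
    by rewrite E0 scaler0 subr0; case: (scs th) => ->; rewrite E0 ?oppr0.
  have Hs : eig_support A u th := En0.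
  by have [_ ->] := Hsig th Hs; rewrite Hp // subrr.
have ev0 : ev != 0.
  by apply/eqP => /matrixP/(_ v 0); rewrite !mxE !eqxx /= => /eqP; rewrite oner_eq0.
have p0 : p != 0.
  by apply: contraNneq ev0 => p0; rewrite evE p0 /poly_mx_app size_poly0 big_ord0.
have sps : (size p <= size s)%N.
  pose mu := \prod_(t <- s) ('X - t%:P).
  have mu0 : mu != 0 by apply: monic_neq0; apply: monic_prod_XsubC.
  have le : (size p <= size (p %% mu)%R)%N.
    by apply: Hmin => th Hs; rewrite horner_mod ?Hp // root_prod_XsubC; apply/sP.
  by have := ltn_modp p mu; rewrite mu0 size_prod_XsubC ltnS => /(leq_trans le).
have indep (q : {poly R}) : q != 0 -> (size q <= size s)%N -> poly_mx_app q A eu != 0.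
  move=> q0 sq; apply/negP => /eqP Q0.
  have rt : all (root q) s.
    apply/allP => th /sP Hs; have := congr1 (mulmx (eigproj A th)) Q0.
    rewrite eigproj_poly mulmx0 => /eqP; rewrite scaler_eq0 (negbTE Hs) orbF.
    by rewrite /root.
  by have := max_poly_roots q0 rt us; rewrite ltnNge sq.
have Wn0 j a b : ((A ^+ j) a b != 0) = walk_of_len e j a b := @adj_pow_neq0 R _ e j a b.
have ent (a b : nat) (c : R) w :
    (A ^+ a *m (c *: (A ^+ b *m eu))) w 0 = c * (A ^+ (a + b)) w u.
  rewrite -scalemxAr mulmxA.
  have -> : A ^+ a *m A ^+ b = A ^+ (a + b) by rewrite exprD -mulmxE.
  by rewrite mxE pow_evec.
set d := ecc e u.
set m := (size p).-1.
have sp : size p = m.+1 by rewrite /m prednK // size_poly_gt0.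
have md : (m <= d)%N by rewrite /d dE; move: sps; rewrite sp; case: (size s).
set k := dist e u v.
have wk : walk_of_len e k u v := @dist_walk _ e u v (conn u v).
have k_le_m : (k <= m)%N.
  have : ev v 0 = 1 by rewrite !mxE !eqxx.
  rewrite evE pma_entry.
  case: (boolP [exists j : 'I_(size p), (A ^+ j) v u != 0]) => [/existsP[j Hj]|/existsPn H].
    move=> _; apply: leq_trans (@dist_le _ e _ _ _ (@walk_sym _ e esym _ _ _ _)) _; first by rewrite -Wn0; exact: Hj.
    by rewrite -ltnS -sp.
  rewrite big1 => [|j _]; first by move=> /eqP; rewrite eq_sym oner_eq0.
  by rewrite pow_evec; have := H j; rewrite negbK => /eqP ->; rewrite mulr0.
have m_le_k : (m <= k)%N.
  have [w Hw] : exists w, dist e u w = d.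
    by exists [arg max_(w > u) dist e u w]; rewrite /d /ecc (@bigop.bigmax_eq_arg _ u xpredT (dist e u)).
  have wd : walk_of_len e d u w by rewrite -Hw; apply: dist_walk.
  have Ad : (A ^+ d) w u != 0 by rewrite Wn0; apply: walk_sym.
  have Alt j : (j < d)%N -> (A ^+ j) w u = 0.
    move=> jd; apply/eqP; rewrite -[_ == 0]negbK Wn0; apply/negP.
    by move=> /(@walk_sym _ e esym)/(@dist_le _ e); rewrite Hw leqNgt jd.
  have key : (A ^+ (d - m) *m ev) w 0 != 0.
    rewrite evE /poly_mx_app mulmx_sumr summxE.
    rewrite sp big_ord_recr /= big1 => [|i _]; last first.
      by rewrite ent Alt ?mulr0 //; move: (ltn_ord i) md; lia.
    rewrite add0r ent subnK // mulf_neq0 //.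
    by move: p0; rewrite -lead_coef_eq0 lead_coefE sp.
  move: key; rewrite pow_evec Wn0 => /(@walk_sym _ e esym) wvw.
  have := @dist_le _ e _ _ _ (@walk_cat _ e _ _ _ _ _ wk wvw); rewrite Hw; lia.
have km : k = m by apply/eqP; rewrite eqn_leq k_le_m m_le_k.
set S := comp_del e v u.
have vS : v \notin S by rewrite inE eqxx.
have uS : u \in S by rewrite inE uv connect0.
have Sclosed x y : x \in S -> e x y -> y != v -> y \in S.
  rewrite !inE => /andP[xv cx] exy yv; rewrite yv /=.
  by apply: connect_trans cx (connect1 _); rewrite /del_vertex xv yv exy.
have Av j : (j < k)%N -> (A ^+ j) v u = 0.
  move=> jk; apply/eqP; rewrite -[_ == 0]negbK Wn0; apply/negP.
  by move=> /(@walk_sym _ e esym)/(@dist_le _ e); rewrite -/k leqNgt jk.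
set M' := sub_adjmx R e S; set eu' := sub_evec R S u.
have claim j : (j <= k)%N ->
    (forall w, w \notin S -> w != v -> (A ^+ j) w u = 0) /\
    (forall i, (M' ^+ j *m eu') i 0 = (A ^+ j) (enum_val i) u).
  elim: j => [_|j IH jk].
    split=> [w wS _|i]; last by rewrite expr0 mul1mx adj_pow0 !mxE.
    rewrite adj_pow0; suff /negbTE -> : w != u by [].
    by apply: contraNneq wS => ->.
  have [IH1 IH2] := IH (ltnW jk).
  split=> [w wS wv|i].
    rewrite adj_powS; apply: big1 => x _.
    case: (boolP (x \in S)) => xS.
      suff -> : e w x = false by rewrite mul0r.
      by apply/negP => ewx; move/negP: wS; apply; apply: Sclosed xS _ wv; rewrite esym.
    by case: (eqVneq x v) => [->|xv]; rewrite ?Av ?IH1 ?mulr0.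
  rewrite exprS -mulmxE -mulmxA mxE adj_powS (bigID (fun x => x \in S)) /=.
  rewrite [X in _ = _ + X]big1 ?addr0 => [|x xS]; last first.
    by case: (eqVneq x v) => [->|xv]; rewrite ?Av ?IH1 ?mulr0.
  rewrite (big_enum_val (fun x => (e (enum_val i) x)%:R * (A ^+ j) x u)).
  by apply: eq_bigr => i' _; rewrite IH2 mxE.
have lc0 : lead_coef p != 0 by rewrite lead_coef_eq0.
have c0 : (lead_coef p)^-1 != 0 by rewrite invr_eq0.
exists (lead_coef p)^-1; split => //.
have sq : size ((lead_coef p)^-1 *: p) = size p by rewrite size_scale.
split.
- by rewrite monicE lead_coefZ mulVf.
- apply/colP => i; rewrite pma_entry [RHS]mxE sq.
  have Hv : ev (enum_val i) 0 = 0.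
    rewrite !mxE eqxx andbT; suff /negbTE -> : enum_val i != v by [].
    by apply: contraNneq vS => <-; apply: enum_valP.
  move: Hv; rewrite evE pma_entry => Hv.
  rewrite -[RHS](mulr0 (lead_coef p)^-1).
  rewrite -(congr1 (fun t => (lead_coef p)^-1 * t) Hv) /= mulr_sumr.
  apply: eq_bigr => j _; rewrite coefZ -mulrA; congr (_ * (_ * _)).
  have jk : (j <= k)%N by rewrite km -ltnS -sp.
  have [_ ->] := claim j jk.
  by rewrite pow_evec.
- move=> r rm r0; rewrite sq leqNgt; apply/negP => lt.
  have rA : poly_mx_app r A eu = 0.
    apply/colP => w; rewrite pma_entry [RHS]mxE.
    have jk (j : 'I_(size r)) : (j < k)%N.
      by rewrite km; move: (ltn_ord j) lt; rewrite sp; lia.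
    case: (boolP (w \in S)) => wS.
      rewrite -(enum_rankK_in uS wS).
      move/colP: r0 => /(_ (enum_rank_in uS w)); rewrite pma_entry [RHS]mxE => H.
      rewrite -[RHS]H; apply: eq_bigr => j _; have [_ ->] := claim j (ltnW (jk j)).
      by rewrite pow_evec.
    apply: big1 => j _; rewrite pow_evec.
    case: (eqVneq w v) => [->|wv]; first by rewrite Av ?mulr0.
    by have [-> //] := claim j (ltnW (jk j)); rewrite mulr0.
  have r0' : r != 0 := monic_neq0 rm.
  have := indep r r0' (leq_trans (ltnW lt) sps).
  by rewrite rA eqxx.
Qed.
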